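(* Let $p,q\ge1$, $N\ge1$, and let $\mu$ be a $q\times p$ matrix of measures. Assume that $\mathscr M_N$, $\mathscr M_{N,(b,0)}$ ($b\in\{1,\dots,q\}$) and $\mathscr M_{N,(0,a)}$ ($a\in\{1,\dots,p\}$) admit Gauss--Borel factorizations $\mathscr M_{N,(n,m)}=\mathscr L_{N,(n,m)}^{-1}\mathscr U_{N,(n,m)}^{-1}$ with lower unitriangular $\mathscr L_{N,(n,m)}$, let $U_b:=\mathscr U_{N,(b,0)}^{-1}\mathscr U_{N,(b-1,0)}$ and $L_a:=\mathscr L_{N,(0,a-1)}\mathscr L_{N,(0,a)}^{-1}$, and write $U_{b,n}:=(U_b)_{n,n}$, $L_{a,n}:=(L_a)_{n,n-1}$. Then for $a\in\{1,\dots,p\}$, $b\in\{1,\dots,q\}$: \[L_{a,n}=(\mathscr L_{N,(0,a-1)})_{n,n-1}-(\mathscr L_{N,(0,a)})_{n,n-1},\quad n\in\{1,\dots,N-1\},\] \[U_{b,n}=\frac{(\mathscr U_{N,(b-1,0)})_{n,n}}{(\mathscr U_{N,(b,0)})_{n,n}},\quad n\in\{0,\dots,N-1\},\] \[L_{a,n}=\frac{(\mathscr U_{N,(0,a)})_{n-1,n-1}}{(\mathscr U_{N,(0,a-1)})_{n,n}},\quad n\in\{1,\dots,N-1\},\] \[U_{b,n}=(1-\delta_{n,0})(\mathscr L_{N,(b,0)})_{n,n-1}-(\mathscr L_{N,(b-1,0)})_{n+1,n},\quad n\in\{0,\dots,N-2\}.\]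
   Context: All matrices are indexed from $0$. Fix integers $p,q\ge1$ and a $q\times p$ matrix $\mu$ of real measures on $\mathbb R$ with finite moments. For $r,n\ge1$, $X^{[n]}_{[r]}(x)$ is the $n\times r$ matrix whose row $k$ is $x^{\lfloor k/r\rfloor}e_{k\bmod r}^\top$ ($e_0,\dots,e_{r-1}$ standard basis of $\mathbb R^r$). Moment matrices: $\mathscr M^{[n,m]}=\int X^{[n]}_{[q]}\,\mathrm d\mu\,(X^{[m]}_{[p]})^\top$, $\mathscr M_n=\mathscr M^{[n,n]}$. $\mathfrak X_{[r,1]}(x)$ is the $r\times r$ matrix with $(\mathfrak X_{[r,1]})_{i,i+1}=1$ ($0\le i\le r-2$), $(\mathfrak X_{[r,1]})_{r-1,0}=x$, other entries $0$. Christoffel perturbations: $\mathrm d\mu_{(n,m)}:=\mathfrak X_{[q,1]}^n\,\mathrm d\mu\,(\mathfrak X_{[p,1]}^m)^\top$, with $\mathscr M_{N,(n,m)}$ the $N\times N$ moment matrix of $\mu_{(n,m)}$; $(n,m)=(0,0)$ gives $\mu$ itself, with factors $\mathscr L_N,\mathscr U_N$. *)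

(* Defs.v *)
From HB Require Import structures.
From mathcomp Require Import all_boot all_order all_algebra.
From mathcomp Require Import all_classical all_reals all_analysis.

Set Implicit Arguments.
Unset Strict Implicit.
Unset Printing Implicit Defensive.

Import Order.TTheory GRing.Theory Num.Theory.
Local Open Scope ring_scope.

(* A real (signed) measure on R, given through a decomposition
   mu = mu.1 - mu.2 into two (positive) measures on the Borel sets of R. *)
Definition realmeasure (R : realType) :=
  ({measure set R -> \bar R} * {measure set R -> \bar R})%type.

Definition integ (R : realType) (mu : realmeasure R) (f : R -> R) : R :=
  fine (\int[mu.1]_x (f x)%:E)%E - fine (\int[mu.2]_x (f x)%:E)%E.

Definition finite_moments (R : realType) (p q : nat)
  (mu : 'I_q -> 'I_p -> realmeasure R) : Prop :=
  forall (i : 'I_q) (j : 'I_p) (k : nat),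
    (mu i j).1.-integrable setT (fun x : R => (x ^+ k)%:E) /\
    (mu i j).2.-integrable setT (fun x : R => (x ^+ k)%:E).

Definition Xmat (R : pzRingType) (n r : nat) (x : R) : 'M[R]_(n, r) :=
  \matrix_(k < n, j < r) (x ^+ (k %/ r)%N * ((j : nat) == (k %% r)%N)%:R).

Definition Xfrak (R : pzRingType) (r : nat) (x : R) : 'M[R]_r :=
  \matrix_(i < r, j < r)
    (if (j : nat) == i.+1 then 1
     else if ((i : nat) == r.-1) && ((j : nat) == 0%N) then x else 0).

Fixpoint mxpow (R : pzRingType) (r : nat) (A : 'M[R]_r) (n : nat) : 'M[R]_r :=
  match n with
  | 0%N => 1%:M
  | n'.+1 => mxpow A n' *m A
  end.

(* N x N moment matrix of the Christoffel perturbation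
   d mu_{(n,m)} = Xfrak_q^n d mu (Xfrak_p^m)^T :
   entry (k,l) = sum_{i,j} int (X_q Xfrak_q^n)_{k,i} (X_p Xfrak_p^m)_{l,j} d mu_{i,j} *)
Definition moment_mx (R : realType) (p q : nat)
  (mu : 'I_q -> 'I_p -> realmeasure R) (n m N : nat) : 'M[R]_N :=
  \matrix_(k < N, l < N)
    \sum_(i < q) \sum_(j < p)
      integ (mu i j) (fun x =>
        (Xmat N q x *m mxpow (Xfrak q x) n) k i *
        (Xmat N p x *m mxpow (Xfrak p x) m) l j).

Definition lower_unitriangular (R : pzRingType) (N : nat) (L : 'M[R]_N) : Prop :=
  (forall i j : 'I_N, (i < j)%N -> L i j = 0) /\ (forall i : 'I_N, L i i = 1).

Definition upper_triangular (R : pzRingType) (N : nat) (U : 'M[R]_N) : Prop :=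
  forall i j : 'I_N, (j < i)%N -> U i j = 0.

Definition GaussBorel (R : comUnitRingType) (N : nat) (M L U : 'M[R]_N) : Prop :=
  [/\ lower_unitriangular L, upper_triangular U, U \in unitmx &
      M = invmx L *m invmx U].

(* entry (i,j) of an N x N matrix, indices given as naturals (0 if out of range) *)
Definition mxe (R : pzRingType) (N : nat) (A : 'M[R]_N) (i j : nat) : R :=
  match @insub _ (fun k => k < N)%N _ i, @insub _ (fun k => k < N)%N _ j with
  | Some i', Some j' => A i' j'
  | _, _ => 0
  end.

(* Main.v *)
Require Import Defs.
From HB Require Import structures.
From mathcomp Require Import all_boot all_order all_algebra.
From mathcomp Require Import all_classical all_reals all_analysis.
Import Order.TTheory GRing.Theory Num.Theory.
Local Open Scope ring_scope.
From mathcomp Require Import zify.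
Set Implicit Arguments. Unset Strict Implicit. Unset Printing Implicit Defensive.
Section LA.
Variable R : fieldType.
Variable N : nat.
Implicit Types A B : 'M[R]_N.

Definition lowerP A := forall i j : 'I_N, (i < j)%N -> A i j = 0.

Lemma sum1 A B (i j k0 : 'I_N) :
  (forall k, k != k0 -> A i k * B k j = 0) -> (A *m B) i j = A i k0 * B k0 j.
Proof.
move=> H; rewrite mxE (bigD1 k0) //= big1 ?addr0 //.
Qed.

Lemma sum2 A B (i j k0 k1 : 'I_N) : k0 != k1 ->
  (forall k, k != k0 -> k != k1 -> A i k * B k j = 0) ->
  (A *m B) i j = A i k0 * B k0 j + A i k1 * B k1 j.
Proof.
move=> n01 H; rewrite mxE (bigD1 k0) //= (bigD1 k1) /=; last by rewrite eq_sym.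
by rewrite big1 ?addr0 // => k /andP[]; apply: H.
Qed.

Lemma inv_lower A : lowerP A -> (forall i, A i i != 0) -> A \in unitmx ->
  lowerP (invmx A) /\ forall i, invmx A i i = (A i i)^-1.
Proof.
move=> lA dA uA.
have AB := mulmxV uA.
have lB : lowerP (invmx A).
  suff H : forall n (i j : 'I_N), (i <= n)%N -> (i < j)%N -> invmx A i j = 0.
    by move=> i j; apply: H (leqnn _).
  elim=> [|n IH] i j hin hij;
  have := congr1 (fun M : 'M[R]_N => M i j) AB;
  (rewrite (@sum1 _ _ i j i); last first);
  try (move=> k hk; case: (ltngtP i k) => hik;
      [ by rewrite lA ?mul0r
      | first [ lia | by rewrite (IH k j) ?mulr0 //; lia ]
      | by move: hk; rewrite -(inj_eq val_inj) /= hik eqxx ]);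
  (rewrite mxE -(inj_eq val_inj) /= (ltn_eqF hij) /= => /eqP; rewrite mulf_eq0 (negbTE (dA i)) /=;
   by move/eqP).
split=> // i.
have := congr1 (fun M : 'M[R]_N => M i i) AB.
rewrite (@sum1 _ _ i i i); last first.
  move=> k hk; case: (ltngtP i k) => hik.
  + by rewrite lA ?mul0r.
  + by rewrite lB ?mulr0.
  + by move: hk; rewrite -(inj_eq val_inj) /= hik eqxx.
rewrite mxE eqxx /= => h.
by apply: (mulfI (dA i)); rewrite h mulfV.
Qed.


Lemma ord_neq (i j : 'I_N) : i != j -> (i : nat) <> j.
Proof. by move=> /eqP h e; apply: h; apply: val_inj. Qed.

Definition upperP A := forall i j : 'I_N, (j < i)%N -> A i j = 0.

Lemma inv_upper A : upperP A -> (forall i, A i i != 0) -> A \in unitmx ->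
  upperP (invmx A) /\ forall i, invmx A i i = (A i i)^-1.
Proof.
move=> uA dA unA.
have l : lowerP A^T by move=> i j h; rewrite mxE uA.
have d : forall i, A^T i i != 0 by move=> i; rewrite mxE.
have un : A^T \in unitmx by rewrite unitmx_tr.
have [h1 h2] := @inv_lower A^T l d un.
split.
- by move=> i j hij; have := h1 j i hij; rewrite -trmx_inv mxE.
- by move=> i; have := h2 i; rewrite -trmx_inv !mxE.
Qed.

Lemma unitri_unit A : lowerP A -> (forall i, A i i = 1) -> A \in unitmx.
Proof.
move=> lA dA; rewrite unitmxE det_trig; last by apply/is_trig_mxP.
by rewrite big1 ?unitr1.
Qed.

Lemma upper_diag A : upperP A -> A \in unitmx -> forall i, A i i != 0.
Proof.
move=> uA; rewrite unitmxE -det_tr det_trig; last first.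
  by apply/is_trig_mxP => i j h; rewrite mxE uA.
rewrite unitfE prodf_seq_neq0 => /allP H i.
by have := H i (mem_index_enum _); rewrite mxE.
Qed.

Lemma inv_unitri A : lowerP A -> (forall i, A i i = 1) ->
  lowerP (invmx A) /\ (forall i, invmx A i i = 1) /\
  (forall n m : 'I_N, (n : nat) = (m : nat).+1 -> invmx A n m = - A n m).
Proof.
move=> lA dA.
have uA := unitri_unit lA dA.
have d : forall i, A i i != 0 by move=> i; rewrite dA oner_neq0.
have [h1 h2] := inv_lower lA d uA.
have h2' : forall i, invmx A i i = 1 by move=> i; rewrite h2 dA invr1.
do 2!split=> //.
move=> n m hnm.
have := congr1 (fun M : 'M[R]_N => M n m) (mulmxV uA).
rewrite (@sum2 _ _ n m m n); last 2 first.
- by apply/negP => /eqP h; move: hnm; rewrite h; lia.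
- move=> k /ord_neq hk1 /ord_neq hk2.
  case: (ltnP m k) => hmk.
  + by rewrite lA ?mul0r //; lia.
  + by rewrite h1 ?mulr0 //; lia.
rewrite mxE -(inj_eq val_inj) /= hnm (_ : (m.+1 == m) = false); last by lia.
by rewrite h2' dA mulr1 mul1r => /eqP; rewrite addr_eq0 => /eqP ->; rewrite opprK.
Qed.

Lemma claim1 L1 L2 : lowerP L1 -> (forall i, L1 i i = 1) ->
  lowerP L2 -> (forall i, L2 i i = 1) ->
  forall n m : 'I_N, (n : nat) = (m : nat).+1 -> (L1 *m invmx L2) n m = L1 n m - L2 n m.
Proof.
move=> l1 d1 l2 d2 n m hnm.
have [h1 [h2 h3]] := inv_unitri l2 d2.
rewrite (@sum2 _ _ n m m n); last 2 first.
- by apply/negP => /eqP h; move: hnm; rewrite h; lia.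
- move=> k /ord_neq hk1 /ord_neq hk2.
  case: (ltnP m k) => hmk.
  + by rewrite l1 ?mul0r //; lia.
  + by rewrite h1 ?mulr0 //; lia.
by rewrite h2 h3 // d1 mulr1 mul1r.
Qed.

Lemma claim2 U1 U2 : upperP U1 -> U1 \in unitmx -> upperP U2 ->
  forall n : 'I_N, (invmx U1 *m U2) n n = U2 n n / U1 n n.
Proof.
move=> u1 un1 u2 n.
have [h1 h2] := inv_upper u1 (upper_diag u1 un1) un1.
rewrite (@sum1 _ _ n n n); last first.
  move=> k; rewrite -(inj_eq val_inj) /= => hk.
  case: (ltnP n k) => hnk.
  + by rewrite u2 ?mulr0.
  + by rewrite h1 ?mul0r //; lia.
by rewrite h2 mulrC.
Qed.


Lemma claim3 L1 M1 U1 L2 M2 U2 :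
  lowerP L1 -> (forall i, L1 i i = 1) -> upperP U1 -> U1 \in unitmx ->
  M1 = invmx L1 *m invmx U1 ->
  lowerP L2 -> (forall i, L2 i i = 1) -> upperP U2 -> U2 \in unitmx ->
  M2 = invmx L2 *m invmx U2 ->
  (forall (j k : 'I_N) (hk : ((k : nat).+1 < N)%N), M2 j k = M1 j (Ordinal hk)) ->
  forall n m : 'I_N, (n : nat) = (m : nat).+1 ->
  (L1 *m invmx L2) n m = U2 m m / U1 n n.
Proof.
move=> l1 d1 u1 un1 eM1 l2 d2 u2 un2 eM2 hM n m hnm.
have e1 : L1 *m M1 = invmx U1 by rewrite eM1 mulmxA mulmxV ?mul1mx // unitri_unit.
have e2 : L1 *m invmx L2 = L1 *m M2 *m U2 by rewrite eM2 -mulmxA mulmxKV.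
have sh : forall (i k : 'I_N) (hk : ((k : nat).+1 < N)%N),
    (L1 *m M2) i k = invmx U1 i (Ordinal hk).
  by move=> i k hk; rewrite -e1 !mxE; apply: eq_bigr => j _; rewrite hM.
have [iu1 du1] := inv_upper u1 (upper_diag u1 un1) un1.
rewrite e2 (@sum1 _ _ n m m); last first.
  move=> k /ord_neq hk; case: (ltnP m k) => hmk.
  + by rewrite u2 ?mulr0.
  + have hl : ((k : nat).+1 < N)%N by have := ltn_ord m; lia.
    by rewrite (sh n k hl) iu1 ?mul0r //= ; lia.
have hl : ((m : nat).+1 < N)%N by rewrite -hnm.
rewrite (sh n m hl).
have -> : Ordinal hl = n by apply: val_inj => /=.
by rewrite du1 mulrC.
Qed.

Lemma claim4 L1 M1 U1 L2 M2 U2 :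
  lowerP L1 -> (forall i, L1 i i = 1) -> upperP U1 -> U1 \in unitmx ->
  M1 = invmx L1 *m invmx U1 ->
  lowerP L2 -> (forall i, L2 i i = 1) -> upperP U2 -> U2 \in unitmx ->
  M2 = invmx L2 *m invmx U2 ->
  (forall (k j : 'I_N) (hk : ((k : nat).+1 < N)%N), M2 k j = M1 (Ordinal hk) j) ->
  forall n n1 : 'I_N, (n1 : nat) = (n : nat).+1 ->
  ((n : nat) = 0%N -> (invmx U2 *m U1) n n = - L1 n1 n) /\
  (forall m : 'I_N, (n : nat) = (m : nat).+1 ->
     (invmx U2 *m U1) n n = L2 n m - L1 n1 n).
Proof.
move=> l1 d1 u1 un1 eM1 l2 d2 u2 un2 eM2 hM n n1 hn1.
have e1 : L2 *m M2 = invmx U2 by rewrite eM2 mulmxA mulmxV ?mul1mx // unitri_unit.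
have e2 : M1 *m U1 = invmx L1 by rewrite eM1 mulmxKV.
have e : invmx U2 *m U1 = L2 *m (M2 *m U1) by rewrite mulmxA e1.
have sh : forall (k j : 'I_N) (hk : ((k : nat).+1 < N)%N),
    (M2 *m U1) k j = invmx L1 (Ordinal hk) j.
  by move=> k j hk; rewrite -e2 !mxE; apply: eq_bigr => i _; rewrite hM.
have [il1 [dl1 sl1]] := inv_unitri l1 d1.
have hk : ((n : nat).+1 < N)%N by rewrite -hn1.
have on1 : Ordinal hk = n1 by apply: val_inj => /=.
split.
- move=> n0; rewrite e (@sum1 _ _ n n n); last first.
    move=> k /ord_neq hk'; rewrite l2 ?mul0r //; lia.
  by rewrite d2 mul1r (sh n n hk) on1 sl1.
- move=> m hnm; rewrite e (@sum2 _ _ n n m n); last 2 first.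
  + by apply/negP => /eqP h; move: hnm; rewrite h; lia.
  + move=> k /ord_neq hk1 /ord_neq hk2; case: (ltnP n k) => hnk.
    * by rewrite l2 ?mul0r.
    * have hk' : ((k : nat).+1 < N)%N by have := ltn_ord n; lia.
      by rewrite (sh k n hk') il1 ?mulr0 //=; lia.
  have hm : ((m : nat).+1 < N)%N by rewrite -hnm.
  rewrite (sh m n hm) (sh n n hk) on1 d2 mul1r.
  have -> : Ordinal hm = n by apply: val_inj => /=.
  by rewrite dl1 mulr1 sl1.
Qed.

End LA.

Lemma mxeE (R : pzRingType) N (A : 'M[R]_N) i j (hi : (i < N)%N) (hj : (j < N)%N) :
  mxe A i j = A (Ordinal hi) (Ordinal hj).
Proof.
rewrite /mxe (@insubT _ (fun k => (k < N)%N) _ i hi) (@insubT _ (fun k => (k < N)%N) _ j hj).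
by [].
Qed.

Lemma Xfrak_row (R : realType) r N (x : R) (k : 'I_N) (j : 'I_r) :
  (Xmat N r x *m Xfrak r x) k j = x ^+ (k.+1 %/ r)%N * ((j : nat) == (k.+1 %% r)%N)%:R.
Proof.
have rpos : (0 < r)%N by apply: leq_ltn_trans (ltn_ord j).
rewrite mxE (bigD1 (Ordinal (ltn_pmod k rpos))) //= big1; last first.
  move=> l hl; rewrite mxE.
  rewrite (_ : ((l : nat) == (k %% r)%N) = false) ?mulr0 ?mul0r //.
  by apply/negbTE; move: hl; apply: contra => /eqP h; apply/eqP; apply: val_inj.
rewrite addr0 !mxE eqxx mulr1.
have hmod : ((k %% r).+1 %% r = k.+1 %% r)%N by rewrite -addn1 modnDml addn1.
rewrite modnS divnS //; case hd: (r %| k.+1)%N => /=.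
- have h1 : ((k %% r).+1 %% r = 0)%N by rewrite hmod; move: hd; rewrite /dvdn => /eqP.
  have h2 : ((k %% r).+1 = r)%N.
    case: (ltnP (k %% r)%N.+1 r) => h.
    + by move: h1; rewrite modn_small.
    + by have := ltn_pmod k rpos; lia.
  have hm : (k %% r = r.-1)%N by lia.
  rewrite hm prednK // (_ : ((j : nat) == r) = false); last by have := ltn_ord j; lia.
  rewrite eqxx /= exprS.
  by case: ((j : nat) == 0%N) => /=; rewrite ?mulr0 ?mulr1 // mulrC.
- case: ((j : nat) == (k %% r)%N.+1) => /=; first by rewrite add0n.
  rewrite (_ : ((k %% r)%N == r.-1) = false) ?mulr0 //.
  apply/negbTE/negP => /eqP hm.
  move: hmod; rewrite hm prednK // modnn => h.
  by move: hd; rewrite /dvdn -h eqxx.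
Qed.

Lemma mxpowS' (R : pzRingType) r (A : 'M[R]_r) n : mxpow A n.+1 = A *m mxpow A n.
Proof.
elim: n => [|n IH]; first by rewrite /= mul1mx mulmx1.
change (mxpow A n.+1 *m A = A *m (mxpow A n *m A)).
by rewrite IH mulmxA.
Qed.

Lemma Xrow (R : realType) r N (x : R) n (k : 'I_N) (i : 'I_r) (hk : (k.+1 < N)%N) :
  (Xmat N r x *m mxpow (Xfrak r x) n.+1) k i =
  (Xmat N r x *m mxpow (Xfrak r x) n) (Ordinal hk) i.
Proof.
rewrite mxpowS' mulmxA !mxE; apply: eq_bigr => j _.
by rewrite Xfrak_row mxE.
Qed.

Lemma mom_row (R : realType) p q (mu : 'I_q -> 'I_p -> realmeasure R) b N
  (k j : 'I_N) (hk : (k.+1 < N)%N) : (0 < b)%N ->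
  moment_mx mu b 0 N k j = moment_mx mu b.-1 0 N (Ordinal hk) j.
Proof.
case: b => // b _ /=; rewrite !mxE; apply: eq_bigr => i _; apply: eq_bigr => l _.
by congr integ; apply: funext => x; rewrite Xrow.
Qed.

Lemma mom_col (R : realType) p q (mu : 'I_q -> 'I_p -> realmeasure R) a N
  (j k : 'I_N) (hk : (k.+1 < N)%N) : (0 < a)%N ->
  moment_mx mu 0 a N j k = moment_mx mu 0 a.-1 N j (Ordinal hk).
Proof.
case: a => // a _ /=; rewrite !mxE; apply: eq_bigr => i _; apply: eq_bigr => l _.
by congr integ; apply: funext => x; rewrite Xrow.
Qed.

Theorem mainTheorem3 (R : realType) (p q N : nat)
  (mu : 'I_q -> 'I_p -> realmeasure R) (L U : nat -> nat -> 'M[R]_N) :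
  (1 <= p)%N -> (1 <= q)%N -> (1 <= N)%N ->
  finite_moments mu ->
  GaussBorel (moment_mx mu 0 0 N) (L 0%N 0%N) (U 0%N 0%N) ->
  (forall b, (1 <= b <= q)%N ->
     GaussBorel (moment_mx mu b 0 N) (L b 0%N) (U b 0%N)) ->
  (forall a, (1 <= a <= p)%N ->
     GaussBorel (moment_mx mu 0 a N) (L 0%N a) (U 0%N a)) ->
  forall a b, (1 <= a <= p)%N -> (1 <= b <= q)%N ->
  let Ub := invmx (U b 0%N) *m U b.-1 0%N in
  let La := L 0%N a.-1 *m invmx (L 0%N a) in
  [/\ (forall n, (1 <= n <= N - 1)%N ->
         mxe La n n.-1 = mxe (L 0%N a.-1) n n.-1 - mxe (L 0%N a) n n.-1),
      (forall n, (n <= N - 1)%N ->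
         mxe Ub n n = mxe (U b.-1 0%N) n n / mxe (U b 0%N) n n),
      (forall n, (1 <= n <= N - 1)%N ->
         mxe La n n.-1 = mxe (U 0%N a) n.-1 n.-1 / mxe (U 0%N a.-1) n n) &
      (forall n, (n + 2 <= N)%N ->
         mxe Ub n n = (1 - (n == 0%N)%:R) * mxe (L b 0%N) n n.-1
                      - mxe (L b.-1 0%N) n.+1 n)].
Proof.
move=> p1 q1 N1 fm H0 Hb Ha a b ha hb Ub La.
have GBb1 : GaussBorel (moment_mx mu b.-1 0 N) (L b.-1 0%N) (U b.-1 0%N).
  case E: b.-1 => [|b']; first exact: H0.
  by apply: Hb; lia.
have GBa1 : GaussBorel (moment_mx mu 0 a.-1 N) (L 0%N a.-1) (U 0%N a.-1).
  case E: a.-1 => [|a']; first exact: H0.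
  by apply: Ha; lia.
have GBb := Hb b hb.
have GBa := Ha a ha.
case: GBb1 => [[lb1 db1] ub1 unb1 eb1].
case: GBb => [[lb db] ub unb eb].
case: GBa1 => [[la1 da1] ua1 una1 ea1].
case: GBa => [[la da] ua una ea].
have b0 : (0 < b)%N by lia.
have a0 : (0 < a)%N by lia.
split.
- move=> n hn.
  have hn' : (n < N)%N by lia.
  have hm : (n.-1 < N)%N by lia.
  rewrite !(mxeE _ hn' hm) /La; apply: claim1 => //=; lia.
- move=> n hn.
  have hn' : (n < N)%N by lia.
  by rewrite !(mxeE _ hn' hn') /Ub; apply: claim2.
- move=> n hn.
  have hn' : (n < N)%N by lia.
  have hm : (n.-1 < N)%N by lia.
  rewrite (mxeE _ hn' hm) (mxeE _ hm hm) (mxeE _ hn' hn') /La.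
  apply: (claim3 la1 da1 ua1 una1 ea1 la da ua una ea) => /=; last by lia.
  by move=> j k hk; apply: mom_col.
- move=> n hn.
  have hn' : (n < N)%N by lia.
  have hn1 : (n.+1 < N)%N by lia.
  have hm : (n.-1 < N)%N by lia.
  rewrite (mxeE _ hn' hn') (mxeE _ hn' hm) (mxeE _ hn1 hn') /Ub.
  have sh : forall (k j : 'I_N) (hk : (k.+1 < N)%N),
      moment_mx mu b 0 N k j = moment_mx mu b.-1 0 N (Ordinal hk) j.
    by move=> k j hk; apply: mom_row.
  have e1 : ((Ordinal hn1 : nat) = (Ordinal hn' : nat).+1)%N by [].
  have [c0 c1] := @claim4 _ _ _ _ _ _ _ _ lb1 db1 ub1 unb1 eb1 lb db ub unb eb
     sh (Ordinal hn') (Ordinal hn1) e1.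
  clear e1 sh.
  case: n hn hn' hn1 hm c0 c1 => [|m] hn hn' hn1 hm c0 c1 /=.
  + by rewrite c0 // subrr mul0r sub0r.
  + by rewrite (c1 (Ordinal hm)) //= subr0 mul1r.
Qed.
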